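(* Let $q \geq 5$ be a prime power and let $\mathcal{X}$ be a plane curve of degree $q-1$ defined over $\mathbb{F}_q$ without $\mathbb{F}_q$-linear components with $\mathrm{N}_q(\mathcal{X}) = (q-1)^2$. If there are two distinct $\mathbb{F}_q$-lines $l^1_\infty, l^2_\infty$ with $(l^1_\infty \cup l^2_\infty)(\mathbb{F}_q) \subseteq Z(\mathcal{X})$, then $a_0 = 3$.
   Context: $\mathcal{X}(\mathbb{F}_q)=\mathcal{X}\cap\mathbb{P}^2(\mathbb{F}_q)$, $\mathrm{N}_q(\mathcal{X})=\#\mathcal{X}(\mathbb{F}_q)$; ''without $\mathbb{F}_q$-linear components'' means no line defined over $\mathbb{F}_q$ is a component. $Z(\mathcal{X}) := \mathbb{P}^2(\mathbb{F}_q)\setminus\mathcal{X}(\mathbb{F}_q)$. $a_0$ is the number of $\mathbb{F}_q$-lines containing no point of $\mathcal{X}(\mathbb{F}_q)$. *)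

(* Defs.v *)
From mathcomp Require Import all_boot all_algebra all_field.
From mathcomp Require Import mpoly.
Set Implicit Arguments. Unset Strict Implicit. Unset Printing Implicit Defensive.
Import GRing.Theory.
Local Open Scope ring_scope.

(* Homogeneous coordinates over a finite field F: a vector of F^3. *)
Definition vec3 (F : finFieldType) := {ffun 'I_3 -> F}.

(* Canonical representative of a projective point / line of P^2(F):
   nonzero vector whose first nonzero coordinate equals 1. *)
Definition normalized (F : finFieldType) (v : vec3 F) : bool :=
  [|| v ord0 == 1,
      (v ord0 == 0) && (v (inord 1) == 1)
    | [&& v ord0 == 0, v (inord 1) == 0 & v (inord 2) == 1]].

(* P^2(F_q); F_q-lines are represented by the same set (coefficient vectors). *)
Definition P2 (F : finFieldType) : {set vec3 F} := [set v | normalized v].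
Definition lines (F : finFieldType) : {set vec3 F} := [set l | normalized l].

Definition on_line (F : finFieldType) (l v : vec3 F) : bool :=
  \sum_(i < 3) l i * v i == 0.

Definition curve_pts (F : finFieldType) (f : {mpoly F[3]}) : {set vec3 F} :=
  [set v in P2 F | f.@[fun i => v i] == 0].

Definition Nq (F : finFieldType) (f : {mpoly F[3]}) : nat := #|curve_pts f|.

Definition Zset (F : finFieldType) (f : {mpoly F[3]}) : {set vec3 F} :=
  P2 F :\: curve_pts f.

Definition linform (F : finFieldType) (a : vec3 F) : {mpoly F[3]} :=
  \sum_(i < 3) a i *: 'X_i.

Definition no_Fq_linear_components (F : finFieldType) (f : {mpoly F[3]}) : Prop :=
  forall a : vec3 F, a != 0 -> ~ exists g : {mpoly F[3]}, f = linform a * g.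

Definition line_pts (F : finFieldType) (l : vec3 F) : {set vec3 F} :=
  [set v in P2 F | on_line l v].

Definition a0 (F : finFieldType) (f : {mpoly F[3]}) : nat :=
  #|[set l in lines F | [disjoint line_pts l & curve_pts f]]|.

(* Main.v *)
Require Import Defs.
From mathcomp Require Import all_boot all_algebra all_field.
From mathcomp Require Import mpoly.
From mathcomp Require Import all_fingroup cyclic ring zify.
Set Implicit Arguments. Unset Strict Implicit. Unset Printing Implicit Defensive.
Import GRing.Theory.
Local Open Scope ring_scope.

Lemma charq (F : finFieldType) : (#|F|%:R : F) = 0.
Proof.
have := @expg_cardG (FinRing.Zmodule_to_baseFinGroup F) [set: F]%G (1%R : F) (in_setT _).
rewrite FinRing.zmodXgE cardsT => h.
transitivity ((1 : F) *+ #|FinRing.Zmodule_to_baseFinGroup F|); first by [].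
exact h.
Qed.

Lemma sum_pow_mid (F : finFieldType) k : (0 < k)%N -> (k < #|F|.-1)%N ->
  \sum_(t : F) t ^+ k = 0.
Proof.
move=> k0 kq.
have [a /andP[a0 ak]] : exists a : F, (a != 0) && (a ^+ k != 1).
  case: (pickP [pred a : F | (a != 0) && (a ^+ k != 1)]) => [a Ha|H]; first by exists a.
  pose rs := enum (predC1 (0 : F)).
  have : (size rs <= k)%N.
    apply: max_unity_roots => //; last by rewrite enum_uniq.
    apply/allP => x; rewrite mem_enum => /= xn.
    rewrite unity_rootE; have := H x; rewrite inE /= in xn; rewrite /= xn /= => /negbFE //.
  by rewrite -cardE cardC1 leqNgt kq.
have : \sum_(t : F) t ^+ k = a ^+ k * \sum_(t : F) t ^+ k.
  rewrite mulr_sumr (reindex_inj (mulfI a0)) /=.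
  by apply: eq_bigr => t _; rewrite exprMn.
move/eqP; rewrite -subr_eq0 -{1}(mul1r (\sum_t _)) -mulrBl mulf_eq0 subr_eq0 eq_sym (negbTE ak) /=.
by move/eqP.
Qed.

Lemma sum_pow (F : finFieldType) k : (2 < #|F|)%N -> (k <= #|F|)%N ->
  \sum_(t : F) t ^+ k = if k == #|F|.-1 then -1 else 0.
Proof.
move=> q2 kq.
have pm1 : forall t : F, t != 0 -> t ^+ #|F|.-1 = 1.
  move=> t t0; apply: (mulfI t0); rewrite mulr1 -exprS prednK ?expf_card //.
  by apply: leq_ltn_trans q2.
case: eqP => [->|/eqP kn].
  rewrite (bigD1 0) //= expr0n /= (_ : (#|F|.-1 == 0)%N = false); last first.
    by apply/negbTE; rewrite -lt0n -ltnS prednK // (leq_ltn_trans _ q2).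
  rewrite add0r (eq_bigr (fun _ => 1)); last by move=> t; apply: pm1.
  rewrite sumr_const cardC1 -(subn1 #|F|) natrB ?charq ?sub0r //.
  by apply: leq_ltn_trans q2.
case: k kq kn => [|k] kq kn.
  by rewrite (eq_bigr (fun _ => 1)) // sumr_const cardT -cardE charq.
case: (ltngtP k.+1 #|F|.-1) => [lt|gt|eq]; first by apply: sum_pow_mid.
  have kF : k.+1 = #|F|.
    apply/eqP; rewrite eqn_leq kq /=; move: gt; rewrite -ltnS prednK //.
    by apply: leq_ltn_trans q2.
  rewrite kF (eq_bigr (fun t => t ^+ 1)); last by move=> t _; rewrite expf_card.
  apply: sum_pow_mid => //; rewrite -ltnS prednK ?(leq_ltn_trans _ q2) //.
by rewrite eq eqxx in kn.
Qed.
Definition i0 : 'I_3 := ord0.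
Definition i1 : 'I_3 := @Ordinal 3 1 isT.
Definition i2 : 'I_3 := @Ordinal 3 2 isT.
Lemma inord1 : inord 1 = i1 :> 'I_3. Proof. by apply: val_inj; rewrite /= inordK. Qed.
Lemma inord2 : inord 2 = i2 :> 'I_3. Proof. by apply: val_inj; rewrite /= inordK. Qed.
Lemma sum3 (R : zmodType) (G : 'I_3 -> R) : \sum_(i < 3) G i = G i0 + G i1 + G i2.
Proof. by rewrite !big_ord_recr big_ord0 /= add0r; congr (G _ + G _ + G _); by apply: val_inj. Qed.
Lemma sum3n (G : 'I_3 -> nat) : (\sum_(i < 3) G i = G i0 + G i1 + G i2)%N.
Proof. by rewrite !big_ord_recr big_ord0 /= add0n; congr (G _ + G _ + G _)%N; by apply: val_inj. Qed.
Lemma prod3 (R : comNzRingType) (G : 'I_3 -> R) : \prod_(i < 3) G i = G i0 * G i1 * G i2.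
Proof. by rewrite !big_ord_recr big_ord0 /= GRing.mul1r; congr (G _ * G _ * G _); by apply: val_inj. Qed.
Lemma ord3P (P : 'I_3 -> Prop) : P i0 -> P i1 -> P i2 -> forall i, P i.
Proof.
move=> H0 H1 H2 [[|[|[|k]]] Hk] //.
- by rewrite (_ : Ordinal Hk = i0) //; apply: val_inj.
- by rewrite (_ : Ordinal Hk = i1) //; apply: val_inj.
- by rewrite (_ : Ordinal Hk = i2) //; apply: val_inj.
Qed.

Definition mk3 (F : finFieldType) (x y z : F) : vec3 F := [ffun i : 'I_3 => nth 0 [:: x; y; z] i].
Lemma mk3E0 (F : finFieldType) (x y z : F) : mk3 x y z i0 = x. Proof. by rewrite ffunE. Qed.
Lemma mk3E1 (F : finFieldType) (x y z : F) : mk3 x y z i1 = y. Proof. by rewrite ffunE. Qed.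
Lemma mk3E2 (F : finFieldType) (x y z : F) : mk3 x y z i2 = z. Proof. by rewrite ffunE. Qed.
Lemma vec3_eq (F : finFieldType) (u v : vec3 F) : u i0 = v i0 -> u i1 = v i1 -> u i2 = v i2 -> u = v.
Proof. by move=> *; apply/ffunP; apply: ord3P. Qed.

Definition dot (F : finFieldType) (l v : vec3 F) : F := \sum_(i < 3) l i * v i.
Lemma dotE (F : finFieldType) (l v : vec3 F) : dot l v = l i0 * v i0 + l i1 * v i1 + l i2 * v i2.
Proof. by rewrite /dot sum3. Qed.
Definition sc (F : finFieldType) (s : F) (v : vec3 F) : vec3 F := [ffun i => s * v i].
Definition comb (F : finFieldType) (x : F) (u : vec3 F) (y : F) (v : vec3 F) (z : F) (w : vec3 F) : vec3 F :=
  [ffun i => x * u i + y * v i + z * w i].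
Definition cross (F : finFieldType) (a b : vec3 F) : vec3 F :=
  mk3 (a i1 * b i2 - a i2 * b i1) (a i2 * b i0 - a i0 * b i2) (a i0 * b i1 - a i1 * b i0).
Definition nz (F : finFieldType) (v : vec3 F) := [|| v i0 != 0, v i1 != 0 | v i2 != 0].
Definition nrmc (F : finFieldType) (v : vec3 F) : F :=
  if v i0 != 0 then (v i0)^-1 else if v i1 != 0 then (v i1)^-1 else (v i2)^-1.
Definition nrm (F : finFieldType) (v : vec3 F) := sc (nrmc v) v.

Lemma normalizedE (F : finFieldType) (v : vec3 F) : normalized v =
  [|| v i0 == 1, (v i0 == 0) && (v i1 == 1) | [&& v i0 == 0, v i1 == 0 & v i2 == 1]].
Proof. by rewrite /normalized inord1 inord2. Qed.

Lemma norm_nz (F : finFieldType) (v : vec3 F) : normalized v -> nz v.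
Proof.
rewrite normalizedE /nz.
by case/or3P => [/eqP->|/andP[_ /eqP->]|/and3P[_ _ /eqP->]]; rewrite oner_eq0 ?orbT.
Qed.

Lemma nrmc_nz (F : finFieldType) (v : vec3 F) : nz v -> nrmc v != 0.
Proof.
rewrite /nz /nrmc; case: ifP => [h _|_]; first by rewrite invr_eq0.
case: ifP => [h _|_ /= h]; by rewrite invr_eq0.
Qed.

Lemma nrm_norm (F : finFieldType) (v : vec3 F) : nz v -> normalized (nrm v).
Proof.
rewrite /nz normalizedE /nrm /nrmc !ffunE.
case: (eqVneq (v i0) 0) => [h0|h0] /=; last by rewrite mulVf ?eqxx.
case: (eqVneq (v i1) 0) => [h1|h1] /=; last by rewrite h0 mulr0 mulVf // !eqxx orbT.
by move=> h2; rewrite h0 h1 !mulr0 mulVf // !eqxx !orbT.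
Qed.

Definition fnz (F : finFieldType) (v : vec3 F) : F :=
  if v i0 != 0 then v i0 else if v i1 != 0 then v i1 else v i2.
Lemma fnz_norm (F : finFieldType) (v : vec3 F) : normalized v -> fnz v = 1.
Proof.
rewrite normalizedE /fnz.
case/or3P => [/eqP e0 | /andP[/eqP e0 /eqP e1] | /and3P[/eqP e0 /eqP e1 /eqP e2]];
  by rewrite ?e0 ?e1 ?e2 ?oner_eq0 ?eqxx.
Qed.
Lemma fnz_sc (F : finFieldType) (v : vec3 F) s : fnz (sc s v) = s * fnz v.
Proof.
rewrite /fnz !ffunE; case: (eqVneq s 0) => [->|s0]; first by rewrite !mul0r eqxx.
by rewrite !mulf_eq0 (negbTE s0) /=; case: ifP => _ //; case: ifP.
Qed.
Lemma norm_uniq (F : finFieldType) (u v : vec3 F) s :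
  normalized u -> normalized v -> u = sc s v -> u = v.
Proof.
move=> Hu Hv Huv.
have s1 : s = 1.
  by have := fnz_norm Hu; rewrite Huv fnz_sc fnz_norm // mulr1.
by rewrite Huv; apply/ffunP => i; rewrite ffunE s1 mul1r.
Qed.

Definition phi (F : finFieldType) (f : {mpoly F[3]}) (v : vec3 F) : F := f.@[fun i => v i].

Lemma mdeg3 (m : 'X_{1..3}) : mdeg m = (m i0 + m i1 + m i2)%N.
Proof. by rewrite mdegE sum3n. Qed.

Lemma phi_sc (F : finFieldType) (f : {mpoly F[3]}) d s v :
  f \is d.-homog -> phi f (sc s v) = s ^+ d * phi f v.
Proof.
move=> /dhomogP hf; rewrite /phi !mevalE mulr_sumr.
apply: eq_big_seq => m /hf hm.
have -> : d = (m i0 + m i1 + m i2)%N by rewrite -hm; exact: mdeg3.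
rewrite !prod3 !ffunE !exprMn !exprD. ring.
Qed.

Lemma eval3 (F : finFieldType) (g : {mpoly F[3]}) x y z :
  g.@[fun i => mk3 x y z i] =
  \sum_(m <- msupp g) g@_m * (x ^+ m i0 * y ^+ m i1 * z ^+ m i2).
Proof. by rewrite mevalE; apply: eq_bigr => m _; rewrite prod3 mk3E0 mk3E1 mk3E2. Qed.

Lemma homog3 (F : finFieldType) (g : {mpoly F[3]}) d m :
  g \is d.-homog -> m \in msupp g -> (m i0 + m i1 + m i2)%N = d.
Proof. by move=> /dhomogP hg /hg hm; rewrite -hm; symmetry; exact: mdeg3. Qed.

Lemma sum_t_eval (F : finFieldType) (g : {mpoly F[3]}) j c :
  (2 < #|F|)%N -> (j <= 1)%N -> g \is (#|F|.-1).-homog ->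
  \sum_(t : F) t ^+ j * g.@[fun i => mk3 1 c t i] =
  \sum_(m <- msupp g) g@_m * (c ^+ m i1 * (if (m i2 + j == #|F|.-1)%N then -1 else 0)).
Proof.
move=> q2 j1 hg.
under eq_bigr => t _ do rewrite eval3 mulr_sumr.
rewrite exchange_big /=; apply: eq_big_seq => m hm.
rewrite -sum_pow; last first.
  have := homog3 hg hm; lia.
  by [].
rewrite !mulr_sumr; apply: eq_bigr => t _; rewrite expr1n mul1r exprD. ring.

Qed.

Lemma sums_struct (F : finFieldType) (g : {mpoly F[3]}) :
  (2 < #|F|)%N -> g \is (#|F|.-1).-homog -> exists α β : F, forall c,
  \sum_(t : F) g.@[fun i => mk3 1 c t i] = - g.@[fun i => mk3 0 0 1 i] /\
  \sum_(t : F) t * g.@[fun i => mk3 1 c t i] = - (α + β * c).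
Proof.
move=> q2 hg.
pose d := #|F|.-1.
exists (\sum_(m <- msupp g) g@_m * ((m i2 + 1 == d) && (m i1 == 0%N))%:R).
exists (\sum_(m <- msupp g) g@_m * ((m i2 + 1 == d) && (m i1 == 1%N))%:R).
move=> c; split.
  have := sum_t_eval c q2 (isT : (0 <= 1)%N) hg.
  under eq_bigr do rewrite expr0 mul1r.
  move=> ->; rewrite eval3 -sumrN; apply: eq_big_seq => m hm.
  have hd := homog3 hg hm; rewrite addn0.
  case: (eqVneq (m i2) d) => [e|ne].
    have [-> ->] : m i0 = 0%N /\ m i1 = 0%N by rewrite /d in e; lia.
    by rewrite !expr0 expr1n; ring.
  have : (m i0 != 0)%N || (m i1 != 0)%N by rewrite /d in ne; lia.
  by case/orP => /negbTE h; rewrite !expr0n h /=; ring.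
have := sum_t_eval c q2 (isT : (1 <= 1)%N) hg.
under eq_bigr do rewrite expr1.
move=> ->; rewrite mulr_suml -big_split /= -sumrN; apply: eq_big_seq => m hm.
have hd := homog3 hg hm.
case: (eqVneq (m i2 + 1)%N d) => [e|ne] /=; last by ring.
have : (m i1 = 0 \/ m i1 = 1)%N by rewrite /d in e; lia.
by case=> ->; rewrite /= ?expr0 ?expr1; ring.
Qed.

Definition linT (F : finFieldType) (U0 U1 U2 : vec3 F) : 3.-tuple {mpoly F[3]} :=
  [tuple (U0 i *: 'X_i0 + U1 i *: 'X_i1 + U2 i *: 'X_i2) | i < 3].
Definition fc (F : finFieldType) (f : {mpoly F[3]}) U0 U1 U2 := f \mPo linT U0 U1 U2.

Lemma fc_eval (F : finFieldType) (f : {mpoly F[3]}) U0 U1 U2 (w : vec3 F) :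
  (fc f U0 U1 U2).@[fun i => w i] = phi f (comb (w i0) U0 (w i1) U1 (w i2) U2).
Proof.
rewrite /fc comp_mpoly_meval /phi; apply: meval_eq => i.
by rewrite tnth_mktuple ffunE !mevalD !mevalZ !mevalXU; ring.
Qed.

Lemma fc_homog (F : finFieldType) (f : {mpoly F[3]}) U0 U1 U2 d :
  f \is d.-homog -> fc f U0 U1 U2 \is d.-homog.
Proof.
move=> /dhomogP hf; rewrite /fc comp_mpolyE big_seq.
apply: (big_ind (fun p => p \is d.-homog)); first exact: dhomog0.
  by move=> p1 p2; apply: dhomogD.
move=> m /hf hm; apply: dhomogZ.
have h1 : forall i, tnth (linT U0 U1 U2) i \is 1.-homog.
  move=> i; rewrite tnth_mktuple.
  by rewrite !dhomogD ?dhomogZ // dhomogX; apply/eqP; exact: mdeg1.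
have -> : d = (\sum_(i < 3) 1 * m i)%N.
  rewrite -hm; transitivity (mdeg m) => //; rewrite mdegE.
  by apply: eq_bigr => i _; rewrite mul1n.
apply: (big_ind2 (fun p k => p \is k.-homog)); first exact: dhomog1.
  by move=> p1 k1 p2 k2; apply: dhomogM.
by move=> i _; apply: dhomogMn.
Qed.

Lemma dot_sc (F : finFieldType) (l v : vec3 F) s : dot l (sc s v) = s * dot l v.
Proof. by rewrite !dotE !ffunE; ring. Qed.
Lemma dot_scl (F : finFieldType) (l v : vec3 F) s : dot (sc s l) v = s * dot l v.
Proof. by rewrite !dotE !ffunE; ring. Qed.
Lemma dot_comb (F : finFieldType) (l : vec3 F) x u y v z w :
  dot l (comb x u y v z w) = x * dot l u + y * dot l v + z * dot l w.
Proof. by rewrite !dotE !ffunE; ring. Qed.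
Lemma dot_combl (F : finFieldType) (l : vec3 F) x u y v z w :
  dot (comb x u y v z w) l = x * dot u l + y * dot v l + z * dot w l.
Proof. by rewrite !dotE !ffunE; ring. Qed.
Lemma sc_sc (F : finFieldType) (v : vec3 F) s t : sc s (sc t v) = sc (s * t) v.
Proof. by apply/ffunP => i; rewrite !ffunE mulrA. Qed.
Lemma sc1 (F : finFieldType) (v : vec3 F) : sc 1 v = v.
Proof. by apply/ffunP => i; rewrite !ffunE mul1r. Qed.
Lemma sc_inj (F : finFieldType) (u v : vec3 F) s : s != 0 -> sc s u = sc s v -> u = v.
Proof.
move=> s0 /ffunP h; apply/ffunP => i; have := h i; rewrite !ffunE; exact: mulfI.
Qed.
Lemma nz_dot (F : finFieldType) (l v : vec3 F) : dot l v != 0 -> nz v.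
Proof.
rewrite /nz dotE; apply: contraR; rewrite !negb_or !negbK.
by case/and3P => /eqP-> /eqP-> /eqP->; rewrite !mulr0 !addr0.
Qed.
Lemma nz_dotl (F : finFieldType) (l v : vec3 F) : dot l v != 0 -> nz l.
Proof.
rewrite /nz dotE; apply: contraR; rewrite !negb_or !negbK.
by case/and3P => /eqP-> /eqP-> /eqP->; rewrite !mul0r !addr0.
Qed.

Lemma nrm_sc (F : finFieldType) (v : vec3 F) : nrm v = sc (nrmc v) v.
Proof. by []. Qed.


Lemma idI1 (F : finFieldType) (a b k : vec3 F) :
  let U0 := cross b k in let U1 := cross k a in let U2 := cross a b in
  let D := dot k U2 in
  [/\ dot a U0 = D, dot b U0 = 0, dot k U0 = 0, dot a U1 = 0 & dot b U1 = D] /\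
  [/\ dot k U1 = 0, dot a U2 = 0, dot b U2 = 0 & dot k U2 = D].
Proof.
by rewrite /= !dotE !mk3E0 !mk3E1 !mk3E2; split; split; ring.
Qed.

Lemma idI2 (F : finFieldType) (a b k v : vec3 F) :
  let U0 := cross b k in let U1 := cross k a in let U2 := cross a b in
  let D := dot k U2 in
  sc D v = comb (dot a v) U0 (dot b v) U1 (dot k v) U2.
Proof.
move=> /=; apply: vec3_eq; rewrite !dotE !ffunE /=; ring.
Qed.

Lemma idI3 (F : finFieldType) (a b k l : vec3 F) :
  let U0 := cross b k in let U1 := cross k a in let U2 := cross a b in
  let D := dot k U2 in
  sc D l = comb (dot l U0) a (dot l U1) b (dot l U2) k.
Proof.
move=> /=; apply: vec3_eq; rewrite !dotE !ffunE /=; ring.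
Qed.

Lemma cross_nz (F : finFieldType) (a b : vec3 F) :
  normalized a -> normalized b -> a != b -> nz (cross a b).
Proof.
move=> na nb ab; case: (boolP (nz (cross a b))) => // hc; exfalso.
apply: (negP ab); apply/eqP; symmetry.
move: hc; rewrite /nz !negb_or !negbK !mk3E0 !mk3E1 !mk3E2 !subr_eq0.
case/and3P => /eqP e0 /eqP e1 /eqP e2.
move: (na); rewrite normalizedE.
case/or3P => [/eqP a0 | /andP[/eqP a0 /eqP a1] | /and3P[/eqP a0 /eqP a1 /eqP a2]].
- apply: (norm_uniq nb na (s := b i0)); apply: vec3_eq; rewrite !ffunE.
  + by rewrite a0 mulr1.
  + by move: e2; rewrite a0 mul1r => ->; rewrite mulrC.
  + by move: e1; rewrite a0 mul1r => <-; rewrite mulrC.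
- apply: (norm_uniq nb na (s := b i1)); apply: vec3_eq; rewrite !ffunE.
  + by move: e2; rewrite a0 a1 mul0r mul1r => <-; rewrite mulr0.
  + by rewrite a1 mulr1.
  + by move: e0; rewrite a1 mul1r => ->; rewrite mulrC.
- apply: (norm_uniq nb na (s := b i2)); apply: vec3_eq; rewrite !ffunE.
  + by move: e1; rewrite a0 a2 mul0r mul1r => ->; rewrite mulr0.
  + by move: e0; rewrite a1 a2 mul0r mul1r => <-; rewrite mulr0.
  + by rewrite a2 mulr1.
Qed.

Definition pickk (F : finFieldType) (P : vec3 F) : vec3 F :=
  if P i0 != 0 then mk3 1 0 0 else if P i1 != 0 then mk3 0 1 0 else mk3 0 0 1.
Lemma pickk_dot (F : finFieldType) (P : vec3 F) : nz P -> dot (pickk P) P != 0.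
Proof.
rewrite /nz /pickk dotE; case: ifP => [h _|_]; first by rewrite !mk3E0 !mk3E1 !mk3E2; rewrite !mul0r !addr0 mul1r.
case: ifP => [h _|_ /= h]; rewrite !mk3E0 !mk3E1 !mk3E2 !mul0r ?add0r ?addr0 mul1r //.
Qed.

Lemma decomp_gen (F : finFieldType) (U0 U1 U2 v : vec3 F) D x y z :
  D != 0 -> x != 0 -> sc D v = comb x U0 y U1 z U2 ->
  v = sc (x / D) (comb 1 U0 (y / x) U1 (z / x) U2).
Proof.
move=> D0 x0 h; apply: (sc_inj D0); rewrite sc_sc h; apply/ffunP => i; rewrite !ffunE.
by field; apply/andP; split.
Qed.

Lemma comb001 (F : finFieldType) (U0 U1 U2 : vec3 F) : comb 0 U0 0 U1 1 U2 = U2.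
Proof. by apply/ffunP => i; rewrite !ffunE; ring. Qed.

Unset Implicit Arguments.

Theorem corollary3p10 (F : finFieldType) (q : nat)
  (hq : #|F| = q) (hq5 : (5 <= q)%N)
  (f : {mpoly F[3]}) (hf0 : f != 0) (hdeg : f \is (q.-1).-homog)
  (hlin : no_Fq_linear_components f)
  (hN : Nq f = (q.-1 ^ 2)%N)
  (l1 l2 : vec3 F) (hl1 : l1 \in lines F) (hl2 : l2 \in lines F)
  (hl12 : l1 != l2)
  (hZ : line_pts l1 :|: line_pts l2 \subset Zset f) :
  a0 f = 3%N.
Proof.
have q2 : (2 < #|F|)%N by rewrite hq; lia.
subst q.
have na : normalized l1 by move: hl1; rewrite inE.
have nb : normalized l2 by move: hl2; rewrite inE.
have nzP := cross_nz na nb hl12.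
set k := pickk (cross l1 l2).
have := idI1 l1 l2 k => /= -[[aU0 bU0 kU0 aU1 bU1] [kU1 aU2 bU2 kU2]].
have I2 := idI2 l1 l2 k; have I3 := idI3 l1 l2 k; rewrite /= in I2 I3.
set U0 := cross l2 k in aU0 bU0 kU0 I2 I3.
set U1 := cross k l1 in aU1 bU1 kU1 I2 I3.
set U2 := cross l1 l2 in nzP aU2 bU2 kU2 I2 I3.
set D := dot k U2 in aU0 bU1 kU2 I2 I3.
have D0 : D != 0 by apply: pickk_dot.
pose Phi x y z := phi f (comb x U0 y U1 z U2).
have hg := fc_homog U0 U1 U2 hdeg.
have gE : forall x y z, (fc f U0 U1 U2).@[fun i => mk3 x y z i] = Phi x y z.
  by move=> x y z; rewrite fc_eval mk3E0 mk3E1 mk3E2.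
have [α [β hS]] := sums_struct q2 hg.
have hS' : forall c, \sum_(t : F) Phi 1 c t = - Phi 0 0 1 /\
    \sum_(t : F) t * Phi 1 c t = - (α + β * c).
  move=> c; have [h1 h2] := hS c; split; [rewrite -gE -h1 | rewrite -h2];
    by apply: eq_bigr => t _; rewrite gE.
clear hS gE.
have Zline : forall v, normalized v -> (dot l1 v == 0) || (dot l2 v == 0) -> phi f v != 0.
  move=> v nv h; have : v \in Zset f.
    by apply: (subsetP hZ); rewrite in_setU !inE nv /on_line -!/(dot _ _).
  by rewrite inE /curve_pts inE /P2 inE nv /= andbT.
have phi0 : forall s v, s != 0 -> (phi f (sc s v) == 0) = (phi f v == 0).
  by move=> s v s0; rewrite (phi_sc _ _ hdeg) mulf_eq0 expf_eq0 (negbTE s0) andbF.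
have decomp : forall v, dot l1 v != 0 ->
    v = sc (dot l1 v / D) (comb 1 U0 (dot l2 v / dot l1 v) U1 (dot k v / dot l1 v) U2).
  by move=> v x0; apply: decomp_gen => //; apply: I2.
have dotw : forall c t, [/\ dot l1 (comb 1 U0 c U1 t U2) = D,
    dot l2 (comb 1 U0 c U1 t U2) = c * D & dot k (comb 1 U0 c U1 t U2) = t * D].
  by move=> c t; rewrite !dot_comb aU0 aU1 aU2 bU0 bU1 bU2 kU0 kU1 -/D; split; ring.
have kap0 : Phi 0 0 1 != 0.
  rewrite /Phi comb001.
  have := Zline _ (nrm_norm nzP); rewrite nrm_sc dot_sc aU2 mulr0 eqxx /= => /(_ isT).
  by rewrite phi0 // nrmc_nz.
pose w c t := comb 1 U0 c U1 t U2.
have wnz : forall c t, nz (w c t).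
  by move=> c t; apply: (@nz_dot _ l1); have [-> _ _] := dotw c t.
pose psi (ct : F * F) := nrm (w ct.1 ct.2).
have phiw : forall c t, (phi f (psi (c, t)) == 0) = (Phi 1 c t == 0).
  by move=> c t; rewrite /psi nrm_sc phi0 // nrmc_nz.
have scn : forall (s : F) (v : vec3 F), nz v -> sc s v = sc (s / nrmc v) (nrm v).
  by move=> s v hv; rewrite nrm_sc sc_sc divfK ?nrmc_nz.
pose CP := [set ct : F * F | (ct.1 != 0) && (Phi 1 ct.1 ct.2 == 0)].
have psi_inj : injective psi.
  move=> [c t] [c' t'] /=; rewrite /psi /= !nrm_sc => h.
  have [d1 d2 d3] := dotw c t; have [d1' d2' d3'] := dotw c' t'.
  have e1 := congr1 (dot l1) h; rewrite !dot_sc d1 d1' in e1.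
  have e2 := mulIf D0 e1; rewrite -e2 in h.
  have {}h := sc_inj (nrmc_nz (wnz c t)) h.
  have e3 := congr1 (dot l2) h; rewrite d2 d2' in e3.
  have e4 := congr1 (dot k) h; rewrite d3 d3' in e4.
  by rewrite (mulIf D0 e3) (mulIf D0 e4).
have curveE : curve_pts f = psi @: CP.
  apply/setP => v; apply/idP/idP.
  - rewrite inE => /andP[]; rewrite inE => nv hv.
    have x0 : dot l1 v != 0.
      by apply/negP => h; move: (Zline v nv); rewrite h /= => /(_ isT); rewrite hv.
    have y0 : dot l2 v != 0.
      by apply/negP => h; move: (Zline v nv); rewrite h orbT => /(_ isT); rewrite hv.
    have dv := decomp v x0.
    have s0 : dot l1 v / D != 0 by rewrite mulf_neq0 ?invr_eq0.
    apply/imsetP; exists (dot l2 v / dot l1 v, dot k v / dot l1 v).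
      rewrite inE /= mulf_neq0 ?invr_eq0 //=.
      by rewrite /Phi -(phi0 _ _ s0) -dv.
    apply: (norm_uniq nv (nrm_norm (wnz _ _))).
    by rewrite {1}dv scn //; apply: wnz.
  - case/imsetP => -[c t] hct ->; rewrite inE /P2 inE nrm_norm ?wnz //=.
    by move: hct; rewrite inE /= => /andP[_]; rewrite -phiw.
have NqCP : Nq f = #|CP| by rewrite /Nq curveE card_imset.
pose Sc c := [set t | Phi 1 c t == 0].
pose N c := #|Sc c|.
have sumN : #|CP| = (\sum_(c : F | c != 0%R) N c)%N.
  rewrite /N /Sc; under eq_bigr do rewrite -sum1_card.
  by rewrite pair_big_dep /= -sum1_card; apply: eq_bigl => -[c t]; rewrite !inE.
have exnz : forall c, exists t, Phi 1 c t != 0.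
  move=> c; case: (pickP (fun t => Phi 1 c t != 0)) => [t ht|H]; first by exists t.
  move: kap0; have [h1 _] := hS' c; rewrite -oppr_eq0 -h1 big1 ?eqxx //.
  by move=> t _; apply/eqP; move: (H t) => /= /negbFE.
have Nle : forall c, (N c <= #|F|.-1)%N.
  move=> c; have [t ht] := exnz c.
  have := cardsC (Sc c).
  have : (0 < #|~: Sc c|)%N.
    by apply/card_gt0P; exists t; rewrite !inE.
  move=> h2 h1; rewrite /N -ltnS prednK; last by apply: ltn_trans q2.
  by rewrite -h1 -{1}(addn0 #|Sc c|) ltn_add2l.
have Neq : forall c, c != 0 -> N c = #|F|.-1.
  have L := leqif_sum (P := fun c : F => c != 0) (fun c _ => leqif_eq (Nle c)).
  move: L => [_]; rewrite -sumN -NqCP hN sum_nat_const cardC1 eqxx.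
  move/esym/forall_inP => H c c0; exact/eqP/H.
have qpos : (0 < #|F|)%N by apply: ltn_trans q2.
set kap := Phi 0 0 1 in kap0 hS'.
have key : forall c, c != 0 -> forall t, (Phi 1 c t != 0) = (t == (α + β * c) / kap).
  move=> c c0.
  have h1 : #|~: Sc c| = 1%N.
    have := cardsC (Sc c); rewrite -/(N c) Neq // -{2}(prednK qpos) -addn1.
    by move/addnI.
  have /cards1P [t0 ht0] := introT eqP h1.
  have ht : forall t, (Phi 1 c t != 0) = (t == t0).
    by move=> t; rewrite -[t == t0]in_set1 -ht0 !inE.
  have [e1 e2] := hS' c.
  rewrite (bigD1 t0) //= big1 ?addr0 in e1; last first.
    by move=> t /negbTE; rewrite -ht => /negbFE/eqP.
  rewrite (bigD1 t0) //= big1 ?addr0 in e2; last first.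
    by move=> t /negbTE; rewrite -ht => /negbFE/eqP ->; rewrite mulr0.
  have -> : (α + β * c) / kap = t0.
    rewrite -[α + β * c]opprK -e2 e1; field.
    exact: kap0.
  by [].
pose al := α / kap. pose be := β / kap.
have gam : forall c, (α + β * c) / kap = al + be * c.
  by move=> c; rewrite /al /be; field; exact: kap0.
pose Lst := comb al l1 be l2 (-1) k.
have dotL : forall v, dot Lst v = al * dot l1 v + be * dot l2 v - dot k v.
  by move=> v; rewrite dot_combl; ring.
have nzL : nz Lst.
  by apply: (@nz_dotl _ _ U2); rewrite dotL aU2 bU2 -/D; rewrite !mulr0 !add0r oppr_eq0.
pose lstar := nrm Lst.
have S0P : forall l, [disjoint line_pts l & curve_pts f] <->
    (forall v, normalized v -> dot l v = 0 -> phi f v != 0).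
  move=> l; split.
    move=> H v nv e; have : v \in line_pts l by rewrite inE /P2 inE nv /=; by rewrite /on_line -/(dot l v) e.
    by move/(disjointFr H); rewrite inE /P2 inE nv /= => /negbT.
  move=> H; rewrite disjoint_subset; apply/subsetP => v.
  rewrite !inE => /andP[nv hl]; apply/negP => /andP[_ hc].
  by move: (H v nv (eqP hl)); rewrite /phi hc.
have onw : forall l c t, dot l (w c t) = dot l U0 + c * dot l U1 + t * dot l U2.
  by move=> l c t; rewrite dot_comb mul1r.
have ptw : forall l c t, normalized l ->
    (forall v, normalized v -> dot l v = 0 -> phi f v != 0) ->
    c != 0 -> dot l (w c t) = 0 -> t = al + be * c.
  move=> l c t nl H c0 e.
  have := H (psi (c, t)) (nrm_norm (wnz c t)).
  rewrite /psi /= nrm_sc dot_sc e mulr0 => /(_ erefl).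
  by rewrite -nrm_sc -/(psi (c, t)) phiw key // gam => /eqP.
have lstarN : normalized lstar := nrm_norm nzL.
have Hl1 : forall v, normalized v -> dot l1 v = 0 -> phi f v != 0.
  by move=> v nv e; apply: Zline; rewrite ?e ?eqxx.
have Hl2 : forall v, normalized v -> dot l2 v = 0 -> phi f v != 0.
  by move=> v nv e; apply: Zline; rewrite ?e ?eqxx ?orbT.
have Hls : forall v, normalized v -> dot lstar v = 0 -> phi f v != 0.
  move=> v nv e.
  have eL : dot Lst v = 0.
    move: e; rewrite /lstar nrm_sc dot_scl => /eqP.
    by rewrite mulf_eq0 (negbTE (nrmc_nz nzL)) /= => /eqP.
  case: (eqVneq (dot l1 v) 0) => [h|x0]; first by apply: Zline => //; rewrite h eqxx.
  case: (eqVneq (dot l2 v) 0) => [h|y0]; first by apply: Zline => //; rewrite h eqxx orbT.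
  rewrite (decomp v x0) phi0 ?mulf_neq0 ?invr_eq0 //.
  change (Phi 1 (dot l2 v / dot l1 v) (dot k v / dot l1 v) != 0).
  rewrite key ?mulf_neq0 ?invr_eq0 // gam.
  have ez : dot k v = al * dot l1 v + be * dot l2 v.
    by move/eqP: eL; rewrite dotL subr_eq0 => /eqP.
  by rewrite ez; apply/eqP; field.
have [c2 /andP[c2n0 c2n1]] : exists c2 : F, (c2 != 0) && (c2 != 1).
  case: (pickP (fun c : F => (c != 0) && (c != 1))) => [c hc|H]; first by exists c.
  have sub : [set: F] \subset [set 0; 1].
    apply/subsetP => x _; rewrite !inE.
    by move: (H x) => /= /negbT; rewrite negb_and !negbK.
  have := subset_leq_card sub; rewrite cardsT cards2 => h.
  have : (#|F| <= 2)%N by apply: (leq_trans h); case: (_ != _).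
  by rewrite leqNgt q2.
have cls : forall l, normalized l ->
    (forall v, normalized v -> dot l v = 0 -> phi f v != 0) ->
    [|| l == l1, l == l2 | l == lstar].
  move=> l nl H.
  have hI3 := I3 l.
  set k0 := dot l U0 in hI3; set k1 := dot l U1 in hI3; set k2 := dot l U2 in hI3.
  have onw' : forall c t, dot l (w c t) = k0 + c * k1 + t * k2 by move=> c t; apply: onw.
  case: (eqVneq k2 0) => [k20|k2n].
    case: (eqVneq k1 0) => [k10|k1n].
      suff -> : l = l1 by rewrite eqxx.
      apply: (norm_uniq nl na (s := k0 / D)); apply: (sc_inj D0); rewrite sc_sc hI3 k10 k20.
      by apply/ffunP => i; rewrite !ffunE; field.
    case: (eqVneq k0 0) => [k00|k0n].
      suff -> : l = l2 by rewrite eqxx orbT.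
      apply: (norm_uniq nl nb (s := k1 / D)); apply: (sc_inj D0); rewrite sc_sc hI3 k00 k20.
      by apply/ffunP => i; rewrite !ffunE; field.
    exfalso.
    have c0 : - k0 / k1 != 0 by rewrite mulf_neq0 ?oppr_eq0 ?invr_eq0.
    have := ptw l (- k0 / k1) (al + be * (- k0 / k1) + 1) nl H c0.
    rewrite onw' k20 mulr0 addr0 => /(_ _)/eqP.
    rewrite -subr_eq0 addrAC subrr add0r oner_eq0; move=> h; suff : false by []; apply: h.
    by field.
  have E : forall c, c != 0 -> k0 + c * k1 + k2 * (al + be * c) = 0.
    move=> c c0; have := ptw l c (- (k0 + c * k1) / k2) nl H c0.
    rewrite onw' => /(_ _) e; rewrite -e; last by field.
    by field.
  have E1 := E 1 (oner_neq0 _); have E2 := E c2 c2n0.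
  have hk1 : k1 = - (k2 * be).
    have : (c2 - 1) * (k1 + k2 * be) =
      (k0 + c2 * k1 + k2 * (al + be * c2)) - (k0 + 1 * k1 + k2 * (al + be * 1)) by ring.
    rewrite E1 E2 subrr => /eqP; rewrite mulf_eq0 subr_eq0 (negbTE c2n1) /= addr_eq0.
    by move/eqP.
  have hk0 : k0 = - (k2 * al).
    move: E1; rewrite hk1 => /eqP.
    rewrite (_ : k0 + 1 * - (k2 * be) + k2 * (al + be * 1) = k0 + k2 * al); last by ring.
    by rewrite addr_eq0 => /eqP.
  have eq1 : l = sc (- k2 / D) Lst.
    apply: (sc_inj D0); rewrite sc_sc hI3 hk0 hk1.
    by apply/ffunP => i; rewrite !ffunE; field.
  suff -> : l = lstar by rewrite eqxx !orbT.
  apply: (norm_uniq nl lstarN (s := - k2 / D / nrmc Lst)).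
  by rewrite /lstar nrm_sc sc_sc divfK ?nrmc_nz.
pose w1 := w 1 (al + be * 1).
have [d1 d2 d3] := dotw 1 (al + be * 1).
have Lw1 : dot lstar w1 = 0.
  rewrite /lstar nrm_sc dot_scl dotL d1 d2 d3.
  by rewrite (_ : al * D + be * (1 * D) - (al + be * 1) * D = 0) ?mulr0 //; ring.
have n1 : l1 != lstar.
  by apply/eqP => e; move: Lw1; rewrite -e d1 => /eqP; rewrite (negbTE D0).
have n2 : l2 != lstar.
  by apply/eqP => e; move: Lw1; rewrite -e d2 mul1r => /eqP; rewrite (negbTE D0).
rewrite /a0; have -> : [set l in lines F | [disjoint line_pts l & curve_pts f]] = l1 |: [set l2; lstar].
  apply/setP => l; rewrite !inE.
  apply/andP/idP.
    case=> nl /S0P H; have := cls l nl H.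
    by rewrite orbA.
  case/or3P => /eqP -> ; [split => //; apply/S0P; exact: Hl1
    | split => //; apply/S0P; exact: Hl2 | split => //; apply/S0P; exact: Hls].
rewrite cardsU1 cards2 !inE negb_or hl12 n1 n2.
by [].
Qed.
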